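(* Let $a\in K$ and let $b_1,\dots,b_\ell\notin K$ be distinct ($\ell\ge 1$). Suppose that either $(a,b_i)\in T$ for all $i$, or there are $a_1,\dots,a_\ell\in K$ with $(a_i,b_i)\in T$ and $a_i\circ b_i=a$ for all $i$. Then $\pi\ge\ell(n-2q-m+1)+q-m-1$.
   Context: $G$ is a set of size $n$ and $G(\circ)$, $G(\ast)$ are distinct groups on $G$ with the same identity element. $\mathrm{diff}(\circ,\ast)=\{(a,b):a\circ b\ne a\ast b\}$, $\mathrm{dist}(\circ,\ast)=|\mathrm{diff}(\circ,\ast)|$, $\mathrm{dist}_a=|\{b:a\circ b\ne a\ast b\}|$; $H=\{a:\mathrm{dist}_a=0\}$, $h=|H|$; $K=\{a:\mathrm{dist}_a<n/3\}$, $k=|K|$; $m=\min\{\mathrm{dist}_a:\mathrm{dist}_a>0\}$. Standing assumption: $m\ge 3$. Let $q=\lceil n/3\rceil$ and the profit $\pi=\mathrm{dist}(\circ,\ast)-((k-h)m+(n-k)q)$. Let $T=\{(a,b)\in\mathrm{diff}(\circ,\ast):a\in K,\ a\circ b\in K\}$. *)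

(* Defs.v *)
From HB Require Import structures.
From mathcomp Require Import all_boot all_order all_algebra.
Set Implicit Arguments. Unset Strict Implicit. Unset Printing Implicit Defensive.

Section Defs.
Variable T : finType.

Definition is_group (op : T -> T -> T) (e : T) : Prop :=
  [/\ associative op, left_id e op, right_id e op &
      forall x, exists y, op x y = e /\ op y x = e].

Variables (o s : T -> T -> T).

Definition diffset : {set T * T} := [set p | o p.1 p.2 != s p.1 p.2].
Definition dist : nat := #|diffset|.
Definition dist_at (a : T) : nat := #|[set b | o a b != s a b]|.
Definition Hset : {set T} := [set a | dist_at a == 0%N].
(* dist_a < n/3  <->  3 * dist_a < n *)
Definition Kset : {set T} := [set a | 3 * dist_at a < #|T|].
(* m = min { dist_a : dist_a > 0 }; the default #|T| is never reached
   when the two operations differ, since dist_a <= #|T|. *)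
Definition mmin : nat := \big[minn/#|T|]_(a | 0 < dist_at a) dist_at a.
(* q = ceil(n/3) *)
Definition qceil : nat := (#|T| + 2) %/ 3.
Definition profit : int :=
  (dist%:Z - ((#|Kset|%:Z - #|Hset|%:Z) * mmin%:Z
              + (#|T|%:Z - #|Kset|%:Z) * qceil%:Z))%R.
Definition Tset : {set T * T} :=
  [set p in diffset | (p.1 \in Kset) && (o p.1 p.2 \in Kset)].
End Defs.

(* Main.v *)
Require Import Defs.
From HB Require Import structures.
From mathcomp Require Import all_boot all_order all_algebra.
From mathcomp Require Import zify ring.
Import Order.TTheory GRing.Theory Num.Theory.
Local Open Scope ring_scope.

Section Aux.
Set Implicit Arguments.
Unset Strict Implicit.
Variables (T : finType) (o s : T -> T -> T) (e : T).
Hypotheses (Go : is_group o e) (Gs : is_group s e).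

Lemma rcanc_s x y c : s x c = s y c -> x = y.
Proof.
case: Gs => sA _ s1 sinv; case: (sinv c) => d [cd _] H.
by rewrite -(s1 x) -(s1 y) -cd !sA H.
Qed.

Lemma lcanc_s c : injective (s c).
Proof.
case: Gs => sA s1 _ sinv; case: (sinv c) => d [_ dc] x y H.
by rewrite -(s1 x) -(s1 y) -dc -!sA H.
Qed.

Lemma lcanc_o c : injective (o c).
Proof.
case: Go => sA s1 _ sinv; case: (sinv c) => d [_ dc] x y H.
by rewrite -(s1 x) -(s1 y) -dc -!sA H.
Qed.

Lemma key a b : o a b != s a b ->
  (#|T| <= dist_at o s a + dist_at o s b + dist_at o s (o a b))%N.
Proof.
move=> Hab.
pose Da := [set y | o a y != s a y].
pose Db := [set y | o b y != s b y].
pose Dc := [set y | o (o a b) y != s (o a b) y].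
have cov : [set: T] \subset Db :|: (s b @^-1: Da) :|: Dc.
  apply/subsetP => c _; rewrite !inE.
  apply/negPn/negP => /norP [/norP [/negPn/eqP h1 /negPn/eqP h2] /negPn/eqP h3].
  move/negP: Hab; apply; apply/eqP.
  case: Go => oA _ _ _.
  apply: (@rcanc_s _ _ c).
  case: Gs => sA _ _ _.
  by rewrite -sA -h2 -h1 oA h3.
have := subset_leq_card cov; rewrite cardsT => h.
apply: (leq_trans h).
rewrite /dist_at -/Da -/Db -/Dc.
apply: (leq_trans (leq_card_setU _ _)).
rewrite -(card_preimset Da (@lcanc_s b)).
have := leq_of_leqif (leq_card_setU Db (s b @^-1: Da)).
lia.
Qed.

Lemma dist_e : dist_at o s e = 0%N.
Proof.
apply/eqP; rewrite cards_eq0; apply/eqP/setP => x; rewrite !inE.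
case: Go => _ o1 _ _; case: Gs => _ s1 _ _.
by rewrite o1 s1 eqxx.
Qed.

Lemma e_in_K : e \in Kset o s.
Proof.
rewrite inE dist_e muln0; apply/card_gt0P; by exists e.
Qed.

Lemma mmin_le x : (0 < dist_at o s x)%N -> (mmin o s <= dist_at o s x)%N.
Proof.
move=> h; rewrite /mmin.
have : x \in index_enum T by rewrite mem_index_enum.
elim: (index_enum T) => // y r IH; rewrite in_cons big_cons.
case/orP => [/eqP <-|xr]; first by rewrite h geq_minl.
case: ifP => _; last exact: IH.
exact: leq_trans (geq_minr _ _) (IH xr).
Qed.

Definition fc (x : T) : int :=
  (dist_at o s x)%:Z - ((x \in Kset o s) && (x \notin Hset o s) : nat)%:Z * (mmin o s)%:Z
   - ((x \notin Kset o s) : nat)%:Z * (qceil T)%:Z.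

Lemma fc_ge0 x : 0 <= fc x.
Proof.
rewrite /fc.
case xK: (x \in Kset o s); case xH: (x \in Hset o s) => /=.
- move: xH; rewrite inE => /eqP ->; lia.
- have : (0 < dist_at o s x)%N by move: xH; rewrite inE; lia.
  move/mmin_le; lia.
- move: xH; rewrite inE => /eqP E; move: xK; rewrite inE E.
  have : (0 < #|T|)%N by apply/card_gt0P; exists x.
  rewrite /qceil; lia.
- move: xK; rewrite inE /qceil; lia.
Qed.

Lemma fcK x : x \in Kset o s -> fc x >= (dist_at o s x)%:Z - (mmin o s)%:Z.
Proof.
rewrite /fc => ->; case: (x \in Hset o s) => /=; lia.
Qed.

Lemma fcNK x : x \notin Kset o s -> fc x = (dist_at o s x)%:Z - (qceil T)%:Z.
Proof.
rewrite /fc => /negbTE ->; rewrite /=; lia.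
Qed.

Lemma card_sum (U : finType) (A : {pred U}) : #|A| = (\sum_x (x \in A : nat))%N.
Proof. by rewrite -sum1_card big_mkcond. Qed.

Lemma dist_sum : dist o s = (\sum_x dist_at o s x)%N.
Proof.
rewrite /dist card_sum.
under [RHS]eq_bigr => x _ do rewrite /dist_at card_sum.
rewrite pair_bigA /=; apply: eq_bigr => -[x y] _; by rewrite !inE.
Qed.

Lemma sumz (F : T -> nat) : \sum_i (F i)%:Z = (\sum_i F i)%N%:Z.
Proof. rewrite -natz natr_sum; apply: eq_bigr => i _; by rewrite natz. Qed.

Lemma profit_sum : profit o s = \sum_x fc x.
Proof.
rewrite /profit /fc !big_split /= !sumrN -!mulr_suml !sumz.
rewrite -dist_sum.
have HK : Hset o s \subset Kset o s.
  apply/subsetP => x; rewrite !inE => /eqP ->; rewrite muln0.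
  by apply/card_gt0P; exists e.
have e1 : (\sum_x ((x \in Kset o s) && (x \notin Hset o s) : nat))%N = (#|Kset o s| - #|Hset o s|)%N.
  have E : #|Kset o s :&: Hset o s| = #|Hset o s| by rewrite (setIidPr HK).
  rewrite -E -cardsD card_sum; apply: eq_bigr => x _; by rewrite !inE andbC.
have e2 : (\sum_x ((x \notin Kset o s) : nat))%N = (#|T| - #|Kset o s|)%N.
  have E2 : #|~: Kset o s| = (#|T| - #|Kset o s|)%N by rewrite -(cardsC (Kset o s)) addKn.
  rewrite -E2 card_sum;  apply: eq_bigr => x _; by rewrite !inE.
rewrite e1 e2.
have := subset_leq_card HK; have := max_card (mem (Kset o s)).
move=> h1 h2.
rewrite -(subzn h1) -(subzn h2).
by rewrite opprD addrA.
Qed.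


Lemma main_gen (l : nat) (Hl : (1 <= l)%N) (a : T) (b c : 'I_l -> T)
  (Ha : a \in Kset o s) (Hb : forall i, b i \notin Kset o s)
  (Hbinj : injective b) (Hcinj : injective c)
  (HcK : forall i, c i \in Kset o s) (Hca : forall i, c i != a)
  (Hkey : forall i, (#|T| <= dist_at o s a + dist_at o s (b i) + dist_at o s (c i))%N) :
  profit o s >=
    (l%:Z * (#|T|%:Z - 2 * (qceil T)%:Z - (mmin o s)%:Z + 1)
     + (qceil T)%:Z - (mmin o s)%:Z - 1).
Proof.
rewrite profit_sum.
pose r := a :: [seq c i | i <- enum 'I_l] ++ [seq b i | i <- enum 'I_l].
have ur : uniq r.
  rewrite /r cons_uniq mem_cat negb_or cat_uniq !map_inj_uniq ?enum_uniq //.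
  have eu : uniq (enum 'I_l) by apply: enum_uniq.
  rewrite enumT in eu; rewrite eu /= andbT.
  apply/andP; split.
  - apply/andP; split; apply/mapP => -[i _ E].
      by move: (Hca i); rewrite -E eqxx.
    by move: (Hb i); rewrite -E Ha.
  - apply/hasP => -[x /mapP [i _ ->] /mapP [j _ E]].
    by move: (Hb i); rewrite E HcK.
have step : \sum_(x <- r) fc x <= \sum_x fc x.
  rewrite big_uniq // big_mkcond /=; apply: ler_sum => x _.
  by case: ifP => _ //; apply: fc_ge0.
apply: le_trans step.
rewrite /r big_cons big_cat /= !big_map -big_split /=.
set S := (X in _ <= fc a + X).
have -> : S = \sum_(i < l) (fc (c i) + fc (b i)).
  rewrite /S; apply: eq_big_seq => //.
set C : int := #|T|%:Z - (qceil T)%:Z - (mmin o s)%:Z - (dist_at o s a)%:Z.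
have step2 : \sum_(i < l) C <= \sum_(i < l) (fc (c i) + fc (b i)).
  apply: ler_sum => i _.
  have h1 := fcK (HcK i); rewrite (fcNK (Hb i)); have h2 := Hkey i.
  rewrite /C; lia.
have fa := fcK Ha.
have hq : (dist_at o s a + 1 <= qceil T)%N.
  move: Ha; rewrite inE /qceil; lia.
rewrite sumr_const card_ord in step2.
have E : C *+ l = l%:Z * C by rewrite -mulr_natl natz.
rewrite E /C in step2.
move: step2 fa hq Hl.
set da := dist_at o s a. set m := mmin o s. set q := qceil T. set n := #|T|.
move=> step2 fa hq Hl.
nia.
Qed.

End Aux.

Theorem lemma9p7 (T : finType) (o s : T -> T -> T) (e : T)
  (Go : is_group o e) (Gs : is_group s e) (Hdistinct : o <> s)
  (Hm : (3 <= mmin o s)%N)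
  (l : nat) (Hl : (1 <= l)%N) (a : T) (b : 'I_l -> T)
  (Ha : a \in Kset o s) (Hb : forall i, b i \notin Kset o s)
  (Hbinj : injective b)
  (Hcase : (forall i, (a, b i) \in Tset o s) \/
           (exists a' : 'I_l -> T, forall i,
              [/\ a' i \in Kset o s, (a' i, b i) \in Tset o s & o (a' i) (b i) = a])) :
  profit o s >=
    (l%:Z * (#|T|%:Z - 2 * (qceil T)%:Z - (mmin o s)%:Z + 1)
     + (qceil T)%:Z - (mmin o s)%:Z - 1).
Proof.
have eK := e_in_K Go Gs.
have bne : forall i, b i != e.
  by move=> i; apply/eqP => E; move: (Hb i); rewrite E eK.
have lc := lcanc_o Go.
case: (Go) => oA o1 o1r _.
case: Hcase => [H | [a' H]].
- apply: (main_gen (c := fun i => o a (b i)) e Hl Ha Hb Hbinj).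
  + by move=> i j /lc /Hbinj.
  + by move=> i; move: (H i); rewrite inE => /andP [_ /andP [_ ->]].
  + move=> i; apply/eqP => E; move/eqP: (bne i); apply; apply: (lc a).
    by rewrite E o1r.
  + move=> i; move: (H i); rewrite inE => /andP [Hd _].
    move: Hd; rewrite inE /= => Hd; have := key Go Gs Hd; by [].
- apply: (main_gen (c := a') e Hl Ha Hb Hbinj).
  + move=> i j E; apply: Hbinj; apply: (lc (a' i)).
    by case: (H i) => _ _ ->; rewrite E; case: (H j) => _ _ ->.
  + by move=> i; case: (H i).
  + move=> i; apply/eqP => E; case: (H i) => _ _ Ha'.
    move/eqP: (bne i); apply; apply: (lc a).
    by rewrite -{1}E Ha' o1r.
  + move=> i; case: (H i) => _; rewrite inE => /andP [Hd _] Ha'.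
    move: Hd; rewrite inE /= => Hd; have := key Go Gs Hd; rewrite Ha' => h; apply: (leq_trans h); lia.
Qed.
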